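(* Let $P_n$ be the path on $n$ vertices. Then $\mathrm{GG}(P_n) \sim \pi\sqrt{n-2}$ as $n \to \infty$, i.e. $\lim_{n\to\infty} \mathrm{GG}(P_n)/(\pi\sqrt{n-2}) = 1$.
   Context: For a connected graph $G$ and an edge $uv$, let $n_u$ (resp. $n_v$) be the number of vertices of $G$ strictly closer (in shortest-path distance) to $u$ than to $v$ (resp. to $v$ than to $u$). The Graovac-Ghorbani index is $\mathrm{GG}(G) = \sum_{uv \in E(G)} \sqrt{\frac{n_u + n_v - 2}{n_u n_v}}$. *)

(* Defs.v *)
From HB Require Import structures.
From mathcomp Require Import all_boot all_order all_algebra.
From mathcomp Require Import all_classical all_reals all_analysis.
Set Implicit Arguments. Unset Strict Implicit. Unset Printing Implicit Defensive.
Import Order.TTheory GRing.Theory Num.Theory.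
Local Open Scope ring_scope.

(* A simple graph is a symmetric irreflexive relation e on a finType T. *)

Fixpoint ball (T : finType) (e : rel T) (k : nat) (x : T) : {set T} :=
  match k with
  | 0 => [set x]
  | k'.+1 => ball e k' x :|: [set z | [exists y in ball e k' x, e y z]]
  end.

(* shortest-path distance: least k with y in ball e k x
   (= #|T| if y is unreachable from x, irrelevant for connected graphs). *)
Definition gdist (T : finType) (e : rel T) (x y : T) : nat :=
  #|[set k : 'I_#|T| | y \notin ball e k x]|.

Definition nclose (T : finType) (e : rel T) (u v : T) : nat :=
  #|[set w | (gdist e w u < gdist e w v)%N]|.

(* Graovac-Ghorbani index; each (unordered) edge is counted twice in the
   double sum over ordered adjacent pairs, hence the factor 1/2. *)
Definition GG (R : realType) (T : finType) (e : rel T) : R :=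
  2^-1 * \sum_(u : T) \sum_(v : T | e u v)
    Num.sqrt (((nclose e u v)%:R + (nclose e v u)%:R - 2)
              / ((nclose e u v)%:R * (nclose e v u)%:R)).

Definition path_rel (n : nat) : rel 'I_n :=
  fun i j => (i.+1 == j :> nat) || (j.+1 == i :> nat).

(* Main.v *)
Require Import Defs.
From HB Require Import structures.
From mathcomp Require Import all_boot all_order all_algebra.
From mathcomp Require Import all_classical all_reals all_analysis.
From mathcomp Require Import ring lra zify.
Import Order.TTheory GRing.Theory Num.Theory.
Import numFieldNormedType.Exports.

Definition dd (x y : nat) := ((x - y) + (y - x))%N.

Lemma card_lt N D : (D <= N)%N -> #|[set k : 'I_N | (k < D)%N]| = D.
Proof.
move=> DN; rewrite -sum1_card.
rewrite (eq_bigl (fun k : 'I_N => (k < D)%N)); last by move=> k; rewrite inE.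
by rewrite -(big_ord_widen N (fun _ => 1%N)) // sum1_card card_ord.
Qed.

Lemma ball_path n k (x : 'I_n) :
  Defs.ball (@path_rel n) k x = [set z : 'I_n | (dd z x <= k)%N].
Proof.
elim: k => [|k IH] /=.
  apply/setP => z; rewrite !inE /dd -(inj_eq val_inj) /=.
  apply/eqP/idP => h; lia.
rewrite IH; apply/setP => z; rewrite !inE.
apply/idP/idP.
  case/orP => [h|]; first lia.
  by case/existsP => y /andP[]; rewrite inE /path_rel /dd => h /orP[] /eqP; lia.
move=> h; case: (leqP (dd z x) k) => [hk|hk]; first by apply/orP; left.
apply/orP; right.
case: (ltngtP x z) => [xz|zx|xz].
- have hy : (z.-1 < n)%N by have := ltn_ord z; lia.
  apply/existsP; exists (Ordinal hy); rewrite inE /path_rel /dd /=.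
  apply/andP; split; first by move: h hk; rewrite /dd; lia.
  apply/orP; left; apply/eqP; lia.
- have hy : (z.+1 < n)%N by have := ltn_ord x; lia.
  apply/existsP; exists (Ordinal hy); rewrite inE /path_rel /dd /=.
  apply/andP; split; first by move: h hk; rewrite /dd; lia.
  apply/orP; right; apply/eqP; lia.
- move: hk; rewrite /dd; lia.
Qed.

Lemma gdist_path n (x y : 'I_n) : gdist (@path_rel n) x y = dd y x.
Proof.
rewrite /gdist.
rewrite (_ : [set k : 'I_#|'I_n| | y \notin Defs.ball (@path_rel n) k x] =
             [set k : 'I_#|'I_n| | (k < dd y x)%N]).
  by rewrite card_lt // card_ord /dd; have := ltn_ord x; have := ltn_ord y; lia.
by apply/setP => k; rewrite !inE ball_path inE -ltnNge.
Qed.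

Lemma nclose_fw n (u v : 'I_n) : (u.+1 = v)%N -> nclose (@path_rel n) u v = u.+1.
Proof.
move=> uv; rewrite /nclose.
rewrite (_ : [set w | _] = [set w : 'I_n | (w < u.+1)%N]).
  by rewrite card_lt //; have := ltn_ord v; lia.
by apply/setP => w; rewrite !inE !gdist_path /dd; apply/idP/idP; lia.
Qed.

Lemma nclose_bw n (u v : 'I_n) : (u.+1 = v)%N -> nclose (@path_rel n) v u = (n - u.+1)%N.
Proof.
move=> uv; rewrite /nclose.
rewrite (_ : [set w | _] = ~: [set w : 'I_n | (w < u.+1)%N]).
  have := cardsC [set w : 'I_n | (w < u.+1)%N]; rewrite card_lt ?card_ord; last first.
    by have := ltn_ord v; lia.
  lia.
by apply/setP => w; rewrite !inE !gdist_path /dd; apply/idP/idP; lia.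
Qed.

Local Open Scope ring_scope.

Lemma GG_path (R : realType) n : (2 <= n)%N ->
  GG R (@path_rel n) =
  \sum_(0 <= j < n.-1) Num.sqrt ((n%:R - 2) / (j.+1%:R * (n - j.+1)%:R)).
Proof.
move=> n2; rewrite /GG.
set F := fun u v : 'I_n => Num.sqrt (((nclose (@path_rel n) u v)%:R +
   (nclose (@path_rel n) v u)%:R - 2) /
   ((nclose (@path_rel n) u v)%:R * (nclose (@path_rel n) v u)%:R) : R).
have Fsym : forall u v, F u v = F v u.
  move=> u v; rewrite /F; congr (Num.sqrt (_ / _)); last exact: mulrC.
  by congr (_ - _); exact: addrC.
have Hs : forall u, \sum_(v : 'I_n | path_rel u v) F u v =
   \sum_(v : 'I_n | (u.+1 == v :> nat)) F u v + \sum_(v : 'I_n | (v.+1 == u :> nat)) F u v.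
  move=> u; rewrite (big_mkcond (fun v : 'I_n => path_rel u v)).
  rewrite (big_mkcond (fun v : 'I_n => (u.+1 == v :> nat))).
  rewrite (big_mkcond (fun v : 'I_n => (v.+1 == u :> nat))) -big_split.
  apply: eq_bigr => v _; rewrite /path_rel.
  case: (u.+1 == v :> nat) / eqP => h1; case: (v.+1 == u :> nat) / eqP => h2 /=;
    rewrite ?addr0 ?add0r //; lia.
rewrite (eq_bigr _ (fun u _ => Hs u)) big_split /=.
have E2 : \sum_(u : 'I_n) \sum_(v : 'I_n | (v.+1 == u :> nat)) F u v =
          \sum_(u : 'I_n) \sum_(v : 'I_n | (u.+1 == v :> nat)) F u v.
  rewrite (eq_bigr (fun u : 'I_n => \sum_(v : 'I_n) (if (v.+1 == u :> nat) then F u v else 0)));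
    last by move=> u _; rewrite big_mkcond.
  rewrite [RHS](eq_bigr (fun u : 'I_n => \sum_(v : 'I_n) (if (u.+1 == v :> nat) then F u v else 0)));
    last by move=> u _; rewrite big_mkcond.
  rewrite exchange_big /=; apply: eq_bigr => u _; apply: eq_bigr => v _.
  by rewrite Fsym.
rewrite E2.
set X := \sum_(u : 'I_n) _.
have -> : 2^-1 * (X + X) = X by lra.
rewrite /X.
pose G := fun k : nat => if (k.+1 < n)%N then
   Num.sqrt ((n%:R - 2) / (k.+1%:R * (n - k.+1)%:R)) : R else 0.
rewrite (eq_bigr (fun u : 'I_n => G u)); last first.
  move=> u _; rewrite /G; case: ltnP => hu.
    rewrite (big_pred1 (Ordinal hu)); last by move=> v; rewrite /= -val_eqE /= eq_sym.
    rewrite /F nclose_fw // nclose_bw // -natrD subnKC //.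
  rewrite big_pred0 // => v; apply/negbTE; apply/eqP => e.
  by have := ltn_ord v; lia.
rewrite -(big_mkord xpredT G).
have e : n = n.-1.+1 by lia.
rewrite {1}e big_nat_recr //=.
have -> : G n.-1 = 0 by rewrite /G -e ltnn.
rewrite addr0; apply: eq_big_nat => i /andP[_ hi].
by rewrite /G (_ : (i.+1 < n)%N) //; lia.
Qed.


Local Open Scope classical_set_scope.
Local Open Scope ring_scope.

Section K.
Variable R : realType.

Lemma acos_lt (x y : R) : -1 <= y -> y < x -> x <= 1 -> acos x < acos y.
Proof.
move=> y1 yx x1.
have x1' : -1 <= x by apply: le_trans (ltW yx).
have y1' : y <= 1 by apply: le_trans x1; apply: ltW.
rewrite -ltr_cos ?acosK //; rewrite in_itv /= ?x1' ?y1' ?acos_ge0 ?acos_lepi ?x1 ?x1' ?y1 ?y1' //.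
Qed.

Lemma le_sin (u v : R) : -(pi/2) <= u -> u <= v -> v <= pi/2 -> sin u <= sin v.
Proof.
move=> hu uv hv; rewrite le_eqVlt in uv; case/orP: uv => [/eqP->//|uv].
have uv' : u <= pi/2 by apply: le_trans (ltW uv) hv.
have vu' : -(pi/2) <= v by apply: le_trans hu (ltW uv).
apply: ltW; rewrite ltr_sin // in_itv /= ?hu ?hv ?uv' ?vu' //.
Qed.

Lemma key (x y : R) : 0 <= y -> y < x -> x <= 1 ->
  Num.sqrt (1 - x^+2) * (acos y - acos x) <= x - y <=
  Num.sqrt (1 - y^+2) * (acos y - acos x).
Proof.
move=> y0 yx x1.
have y1 : -1 <= y by apply: le_trans y0.
have x0 : 0 <= x by apply: le_trans (ltW yx).
have x1' : -1 <= x by apply: le_trans x0.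
have y1' : y <= 1 by apply: le_trans x1; apply: ltW.
have ab := @acos_lt x y y1 yx x1.
have a0 : 0 <= acos x by rewrite acos_ge0 // x1' x1.
have bpi : acos y <= pi / 2.
  rewrite le_eqVlt in y0; case/orP: y0 => [/eqP<-|y0]; first by rewrite acos0.
  by rewrite -acos0; apply: ltW; apply: acos_lt => //; rewrite ?lerN10.
have [c cab Hc] := @MVT R cos (fun z => - sin z) (acos x) (acos y) ab
  (fun z _ => is_derive_cos z) (continuous_subspaceT (@continuous_cos R)).
rewrite !acosK ?in_itv /= ?x1 ?x1' ?y1 ?y1' // in Hc.
have -> : x - y = sin c * (acos y - acos x).
  by apply: (@oppr_inj _); rewrite opprB Hc mulNr.
rewrite -!sin_acos ?x1 ?x1' ?y1 ?y1' //.
move: cab; rewrite in_itv /= => /andP[ac cb].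
have hpi : 0 <= pi / 2 :> R by rewrite divr_ge0 // pi_ge0.
have hn : -(pi/2) <= acos x by apply: le_trans a0; rewrite oppr_le0.
have hc1 : -(pi/2) <= c by apply: le_trans hn (ltW ac).
have hc2 : c <= pi/2 by apply: le_trans (ltW cb) bpi.
have hb : -(pi/2) <= acos y by apply: le_trans hn (ltW ab).
have ha : acos x <= pi/2 by apply: le_trans (ltW ab) bpi.
rewrite !ler_wpM2r ?subr_ge0 ?(ltW ab) //.
- exact: (le_sin _ _ hc1 (ltW cb) bpi).
- exact: (le_sin _ _ hn (ltW ac) hc2).
Qed.
Lemma conv1 (c r D : R) : 0 < c -> 0 < r -> c * r * D <= c -> D <= r^-1.
Proof.
move=> c0 r0 h.
have e : r * r^-1 = 1 by rewrite mulfV // gt_eqF.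
have cr : 0 < c * r by rewrite mulr_gt0.
nra.
Qed.
Lemma conv2 (c r D : R) : 0 < c -> 0 < r -> c <= c * r * D -> r^-1 <= D.
Proof.
move=> c0 r0 h.
have e : r * r^-1 = 1 by rewrite mulfV // gt_eqF.
have cr : 0 < c * r by rewrite mulr_gt0.
nra.
Qed.

Lemma key2 (x y : R) : -1 <= y -> y < x -> x <= 0 ->
  Num.sqrt (1 - y^+2) * (acos y - acos x) <= x - y <=
  Num.sqrt (1 - x^+2) * (acos y - acos x).
Proof.
move=> y1 yx x0.
have y1' : y <= 1 by apply: le_trans (ltW yx) (le_trans x0 _).
have x1' : -1 <= x by apply: le_trans y1 (ltW yx).
have x1 : x <= 1 by apply: le_trans x0 _.
have H := @key (- y) (- x).
rewrite !sqrrN in H.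
have E : acos (- x) - acos (- y) = acos y - acos x.
  by rewrite !acosN ?x1 ?x1' ?y1 ?y1' //; lra.
have E2 : - y - - x = x - y by lra.
rewrite E E2 in H.
apply: H; first by rewrite oppr_ge0.
  by rewrite ltrN2.
by rewrite lerNl.
Qed.

Definition ff (N t : R) := (Num.sqrt (t * (N - t)))^-1.
Definition ph (N t : R) := acos (1 - 2 * t / N).

Lemma sq_x (N t : R) : 0 < N -> 0 <= t * (N - t) ->
  Num.sqrt (1 - (1 - 2 * t / N)^+2) = 2 / N * Num.sqrt (t * (N - t)).
Proof.
move=> N0 h.
have -> : 1 - (1 - 2 * t / N)^+2 = (2 / N)^+2 * (t * (N - t)).
  by field; rewrite gt_eqF.
by rewrite sqrtrM ?sqr_ge0 // sqrtr_sqr ger0_norm // divr_ge0 // ltW.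
Qed.

Lemma x_diff (N t : R) : 0 < N -> 
  (1 - 2 * t / N) - (1 - 2 * (t + 1) / N) = 2 / N.
Proof. by move=> N0; field; rewrite gt_eqF. Qed.


Lemma ffE (N t : R) : ff N t = (Num.sqrt (t * (N - t)))^-1. Proof. by []. Qed.

Lemma nraN (N a b : R) : 0 < N -> a * N <= b * N -> a <= b.
Proof. by move=> N0; rewrite ler_pM2r. Qed.

Lemma divE (N a : R) : 0 < N -> a / N * N = a.
Proof. by move=> N0; rewrite divfK // gt_eqF. Qed.

Ltac xs N0 := apply: (nraN _ _ _ N0); rewrite ?mulrBl ?mul1r ?divE //; lra.
Ltac xsl N0 := apply: (@lt_le_trans _ _ _ _ _ _ (lexx _)); rewrite -(ltr_pM2r N0) ?mulrBl ?mul1r ?divE //; lra.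

Lemma stepL1 (N t : R) : 0 < t -> 2 * (t + 1) <= N ->
  ph N (t + 1) - ph N t <= ff N t.
Proof.
move=> t0 tN.
have N0 : 0 < N by lra.
have h1 : 0 <= 1 - 2 * (t + 1) / N by xs N0.
have h2 : 1 - 2 * (t + 1) / N < 1 - 2 * t / N.
  by rewrite -(ltr_pM2r N0) !mulrBl !mul1r !divE //; lra.
have h3 : 1 - 2 * t / N <= 1 by xs N0.
have := @key _ _ h1 h2 h3.
rewrite sq_x // ?x_diff //; last by apply: mulr_ge0; lra.
move=> /andP[h _]; apply: conv1 h; first by rewrite divr_gt0.
by rewrite sqrtr_gt0 mulr_gt0 //; lra.
Qed.

Lemma stepL2 (N t : R) : 0 <= t -> 2 * (t + 1) <= N ->
  ff N (t + 1) <= ph N (t + 1) - ph N t.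
Proof.
move=> t0 tN.
have N0 : 0 < N by lra.
have h1 : 0 <= 1 - 2 * (t + 1) / N by xs N0.
have h2 : 1 - 2 * (t + 1) / N < 1 - 2 * t / N.
  by rewrite -(ltr_pM2r N0) !mulrBl !mul1r !divE //; lra.
have h3 : 1 - 2 * t / N <= 1 by xs N0.
have := @key _ _ h1 h2 h3.
rewrite (@sq_x N (t + 1)) // ?x_diff //; last by apply: mulr_ge0; lra.
move=> /andP[_ h]; apply: conv2 h; first by rewrite divr_gt0.
by rewrite sqrtr_gt0 mulr_gt0 //; lra.
Qed.

Lemma stepU1 (N t : R) : 0 < t -> N <= 2 * t -> t + 1 <= N ->
  ff N t <= ph N (t + 1) - ph N t.
Proof.
move=> t0 tN tN'.
have N0 : 0 < N by lra.
have h1 : -1 <= 1 - 2 * (t + 1) / N by xs N0.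
have h2 : 1 - 2 * (t + 1) / N < 1 - 2 * t / N.
  by rewrite -(ltr_pM2r N0) !mulrBl !mul1r !divE //; lra.
have h3 : 1 - 2 * t / N <= 0 by xs N0.
have := @key2 _ _ h1 h2 h3.
rewrite (@sq_x N t) // ?x_diff //; last by apply: mulr_ge0; lra.
move=> /andP[_ h]; apply: conv2 h; first by rewrite divr_gt0.
by rewrite sqrtr_gt0 mulr_gt0 //; lra.
Qed.

Lemma stepU2 (N t : R) : N <= 2 * t -> t + 1 < N ->
  ph N (t + 1) - ph N t <= ff N (t + 1).
Proof.
move=> tN tN'.
have N0 : 0 < N by lra.
have h1 : -1 <= 1 - 2 * (t + 1) / N by xs N0.
have h2 : 1 - 2 * (t + 1) / N < 1 - 2 * t / N.
  by rewrite -(ltr_pM2r N0) !mulrBl !mul1r !divE //; lra.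
have h3 : 1 - 2 * t / N <= 0 by xs N0.
have := @key2 _ _ h1 h2 h3.
rewrite (@sq_x N (t + 1)) // ?x_diff //; last by apply: mulr_ge0; lra.
move=> /andP[h _]; apply: conv1 h; first by rewrite divr_gt0.
by rewrite sqrtr_gt0 mulr_gt0 //; lra.
Qed.

Lemma halfP n : (2 * n./2 <= n /\ n <= 2 * n./2 + 1)%N.
Proof. have := odd_double_half n. rewrite -muln2. case: (odd n) => /=; lia. Qed.

Lemma rnat (a b : nat) : (a <= b)%N -> (a%:R <= b%:R :> R).
Proof. by rewrite ler_nat. Qed.
Lemma rnatl (a b : nat) : (a < b)%N -> (a%:R < b%:R :> R).
Proof. by rewrite ltr_nat. Qed.

Definition S (n : nat) : R := \sum_(0 <= j < n.-1) ff n%:R j.+1%:R.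
Definition phn (n k : nat) : R := ph n%:R k%:R.

Lemma stepL1n n j : (0 < j)%N -> (2 * j.+1 <= n)%N ->
  phn n j.+1 - phn n j <= ff n%:R j%:R.
Proof.
move=> j0 jn; rewrite /phn -natr1; apply: stepL1.
  by rewrite ltr0n.
by have := rnat _ _ jn; rewrite natrM -natr1 => h; lra.
Qed.

Lemma stepL2n n j : (2 * j.+1 <= n)%N ->
  ff n%:R j.+1%:R <= phn n j.+1 - phn n j.
Proof.
move=> jn; rewrite /phn -natr1; apply: stepL2 => //.
by have := rnat _ _ jn; rewrite natrM -natr1 => h; lra.
Qed.

Lemma stepU1n n j : (0 < j)%N -> (n <= 2 * j)%N -> (j.+1 <= n)%N ->
  ff n%:R j%:R <= phn n j.+1 - phn n j.
Proof.
move=> j0 jn jn'; rewrite /phn -natr1; apply: stepU1.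
- by rewrite ltr0n.
- by have := rnat _ _ jn; rewrite natrM => h; lra.
- by have := rnat _ _ jn'; rewrite -natr1.
Qed.

Lemma stepU2n n j : (n <= 2 * j)%N -> (j.+1 < n)%N ->
  phn n j.+1 - phn n j <= ff n%:R j.+1%:R.
Proof.
move=> jn jn'; rewrite /phn -natr1; apply: stepU2.
- by have := rnat _ _ jn; rewrite natrM => h; lra.
- by have := rnatl _ _ jn'; rewrite -natr1.
Qed.

Lemma phn0 n : phn n 0 = 0.
Proof. by rewrite /phn /ph mulr0 mul0r subr0 acos1. Qed.

Lemma phnn n : (0 < n)%N -> phn n n = pi.
Proof.
move=> n0; rewrite /phn /ph.
have -> : 1 - 2 * n%:R / n%:R = - 1 :> R.
  by field; rewrite pnatr_eq0 -lt0n.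
exact: acosN1.
Qed.

Lemma upper n : (3 <= n)%N -> S n <= phn n n./2 + pi - phn n (n./2).+1.
Proof.
move=> n3; have [h1 h2] := halfP n.
rewrite /S (@big_cat_nat _ _ _ n./2) /=; [|lia|lia].
have A1 : \sum_(0 <= j < n./2) ff n%:R j.+1%:R <=
          \sum_(0 <= j < n./2) (phn n j.+1 - phn n j).
  apply: ler_sum_nat => j /andP[_ jh]; apply: stepL2n; lia.
have A2 : \sum_(n./2 <= j < n.-1) ff n%:R j.+1%:R <=
          \sum_(n./2 <= j < n.-1) (phn n j.+2 - phn n j.+1).
  apply: ler_sum_nat => j /andP[hj jn]; apply: stepU1n; lia.
rewrite telescope_sumr // phn0 in A1.
rewrite (telescope_sumr (fun j => phn n j.+1)) in A2; last by lia.
have e : (n.-1).+1 = n by lia.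
rewrite e phnn in A2; last by lia.
lra.
Qed.

Lemma ff_ge0 N t : 0 <= ff N t.
Proof. by rewrite /ff invr_ge0 sqrtr_ge0. Qed.

Lemma lower n : (3 <= n)%N ->
  phn n n./2 - phn n 1 + phn n n.-1 - phn n (n./2).+1 <= S n.
Proof.
move=> n3; have [h1 h2] := halfP n.
rewrite /S (@big_cat_nat _ _ _ (n./2).-1) /=; [|lia|lia].
rewrite (@big_cat_nat _ _ _ (n./2).+1 (n./2).-1) /=; [|lia|lia].
have A1 : \sum_(0 <= j < (n./2).-1) (phn n j.+2 - phn n j.+1) <=
          \sum_(0 <= j < (n./2).-1) ff n%:R j.+1%:R.
  apply: ler_sum_nat => j /andP[_ jh]; apply: stepL1n; lia.
have A2 : \sum_((n./2).+1 <= j < n.-1) (phn n j.+1 - phn n j) <=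
          \sum_((n./2).+1 <= j < n.-1) ff n%:R j.+1%:R.
  apply: ler_sum_nat => j /andP[hj jn]; apply: stepU2n; lia.
have A3 : 0 <= \sum_((n./2).-1 <= j < (n./2).+1) ff n%:R j.+1%:R.
  by apply: sumr_ge0 => j _; exact: ff_ge0.
rewrite (telescope_sumr (fun j => phn n j.+1)) in A1; last by lia.
rewrite telescope_sumr in A2; last by lia.
have e : ((n./2).-1).+1 = n./2 by lia.
rewrite e in A1.
lra.
Qed.

Lemma cvg0_bound (u : nat -> R) (c : R) :
  (forall n, (1 <= n)%N -> `|u n| <= c * harmonic n) -> u @ \oo --> 0.
Proof.
move=> H.
have hc : (fun n => c * harmonic n) @ \oo --> (0 : R).
  rewrite -(mulr0 c); apply: cvgMl_tmp; exact: cvg_harmonic.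
apply: (@squeeze_cvgr _ _ _ _ (fun n => - (c * harmonic n)) (fun n => c * harmonic n)).
- near=> n; rewrite -ler_norml; apply: H.
  by near: n; apply: nbhs_infty_ge.
- by rewrite -oppr0; apply: cvgN.
- exact: hc.
Unshelve. all: by end_near.
Qed.

Lemma bound_aux (N a : R) : 1 <= N -> N - 2 <= 2 * a <= N + 2 ->
  `|1 - 2 * a / N| <= 4 * (N + 1)^-1.
Proof.
move=> N1 /andP[h1 h2].
have N0 : 0 < N by lra.
set z := N^-1; set w := (N + 1)^-1.
have z0 : 0 < z by rewrite invr_gt0.
have w0 : 0 < w by rewrite invr_gt0; lra.
have zN : z * N = 1 by rewrite mulVf // gt_eqF.
have wN : w * (N + 1) = 1 by rewrite mulVf // gt_eqF //; lra.
have zw : 2 * z <= 4 * w by nra.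
have -> : 1 - 2 * a / N = (N - 2 * a) * z by rewrite /z; field; rewrite gt_eqF.
rewrite ler_norml; apply/andP; split; nra.
Qed.

Lemma bound_w (N : R) : 1 <= N ->
  `|1 - (1 - 2 * 1 / N)^+2| <= 8 * (N + 1)^-1.
Proof.
move=> N1.
have N0 : 0 < N by lra.
set z := N^-1; set w := (N + 1)^-1.
have z0 : 0 < z by rewrite invr_gt0.
have w0 : 0 < w by rewrite invr_gt0; lra.
have zN : z * N = 1 by rewrite mulVf // gt_eqF.
have wN : w * (N + 1) = 1 by rewrite mulVf // gt_eqF //; lra.
have zw : 4 * z <= 8 * w by nra.
have z1 : z <= 1 by nra.
have -> : 1 - (1 - 2 * 1 / N)^+2 = 4 * z - 4 * z * z by rewrite /z; field; rewrite gt_eqF.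
rewrite ler_norml; apply/andP; split; nra.
Qed.

Lemma harmE n : harmonic n = (n%:R + 1 : R)^-1.
Proof. by rewrite /= natr1. Qed.

Lemma lim_half : (fun n => phn n n./2) @ \oo --> pi / 2.
Proof.
have h0 : (fun n => 1 - 2 * (n./2)%:R / n%:R : R) @ \oo --> 0.
  apply: (@cvg0_bound _ 4) => n n1; rewrite harmE; apply: bound_aux.
    by rewrite (ler_nat R 1).
  have [h1 h2] := halfP n.
  have := rnat _ _ h1; have := rnat _ _ h2; rewrite !natrD => a b.
  apply/andP; split; lra.
rewrite -[pi / 2]acos0.
by apply: (continuous_cvg _ _ h0); apply: continuous_acos; rewrite ?ltrN10 ?ltr01.
Qed.

Lemma lim_half1 : (fun n => phn n (n./2).+1) @ \oo --> pi / 2.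
Proof.
have h0 : (fun n => 1 - 2 * ((n./2).+1)%:R / n%:R : R) @ \oo --> 0.
  apply: (@cvg0_bound _ 4) => n n1; rewrite harmE; apply: bound_aux.
    by rewrite (ler_nat R 1).
  have [h1 h2] := halfP n.
  have := rnat _ _ h1; have := rnat _ _ h2; rewrite -natr1 !natrD => a b.
  apply/andP; split; lra.
rewrite -[pi / 2]acos0.
by apply: (continuous_cvg _ _ h0); apply: continuous_acos; rewrite ?ltrN10 ?ltr01.
Qed.

Lemma asin0 : asin (0 : R) = 0.
Proof. by have := @sinK R 0; rewrite sin0 => ->; rewrite // in_itv /= oppr_le0 divr_ge0 ?pi_ge0. Qed.

Lemma acos_asin (x : R) : 0 <= x -> x <= 1 -> acos x = asin (Num.sqrt (1 - x^+2)).
Proof.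
move=> x0 x1.
have xm : -1 <= x by apply: le_trans x0; rewrite lerN10.
rewrite -sin_acos ?xm ?x1 // sinK //.
have a0 : 0 <= acos x by rewrite acos_ge0 // xm x1.
have ap : acos x <= pi / 2.
  rewrite le_eqVlt in x0; case/orP: x0 => [/eqP<-|x0]; first by rewrite acos0.
  by rewrite -acos0; apply: ltW; apply: acos_lt => //; rewrite ?lerN10.
rewrite in_itv /= ap andbT; apply: (le_trans _ a0); rewrite oppr_le0 divr_ge0 // pi_ge0.
done.
Qed.

Lemma lim_one : (fun n => phn n 1) @ \oo --> 0.
Proof.
have h0 : (fun n => 1 - (1 - 2 * 1 / n%:R)^+2 : R) @ \oo --> 0.
  apply: (@cvg0_bound _ 8) => n n1; rewrite harmE; apply: bound_w.
  by rewrite (ler_nat R 1).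
have h1 : (fun n => Num.sqrt (1 - (1 - 2 * 1 / n%:R)^+2) : R) @ \oo --> 0.
  rewrite -[X in _ --> X]sqrtr0; apply: (continuous_cvg _ _ h0); exact: sqrt_continuous.
have h2 : (fun n => asin (Num.sqrt (1 - (1 - 2 * 1 / n%:R)^+2)) : R) @ \oo --> 0.
  rewrite -[X in _ --> X]asin0; apply: (continuous_cvg _ _ h1).
  by apply: continuous_asin; rewrite ltrN10 ltr01.
apply: cvg_trans h2; apply: near_eq_cvg; near=> n.
have n2 : (2 <= n)%N by near: n; apply: nbhs_infty_ge.
have N2 : (2 : R) <= n%:R by rewrite (ler_nat R 2).
have N0 : (0 : R) < n%:R by lra.
rewrite /= /phn /ph acos_asin //.
by apply: (nraN _ _ _ N0); rewrite mulrBl mul1r divE //; lra.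
Unshelve. all: by end_near.
Qed.

Lemma phn_last n : (1 <= n)%N -> phn n n.-1 = pi - phn n 1.
Proof.
case: n => // m _; rewrite /phn /ph /= -acosN.
  congr acos; rewrite -natr1; field.
  by rewrite addrC natr1 pnatr_eq0.
have N1 : (1 : R) <= m.+1%:R by rewrite (ler_nat R 1).
have N0 : (0 : R) < m.+1%:R by lra.
apply/andP; split; apply: (nraN _ _ _ N0); rewrite mulrBl mul1r divE //; lra.
Qed.

Lemma lim_U : (fun n => phn n n./2 + pi - phn n (n./2).+1) @ \oo --> pi.
Proof.
have H := (cvgB (cvgD lim_half (cvg_cst pi)) lim_half1).
have e : pi / 2 + pi - pi / 2 = pi :> R by lra.
rewrite e in H; apply: H.
Qed.

Lemma lim_L : (fun n => phn n n./2 - phn n 1 + phn n n.-1 - phn n (n./2).+1) @ \oo --> pi.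
Proof.
have H : (fun n => phn n n./2 - phn n 1 + (pi - phn n 1) - phn n (n./2).+1) @ \oo --> pi.
  have H := (cvgB (cvgD (cvgB lim_half lim_one) (cvgB (cvg_cst pi) lim_one)) lim_half1).
  have e : pi / 2 - 0 + (pi - 0) - pi / 2 = pi :> R by lra.
  rewrite e in H; apply: H.
apply: cvg_trans H; apply: near_eq_cvg; near=> n.
rewrite /= phn_last //; near: n; exact: nbhs_infty_ge.
Unshelve. all: by end_near.
Qed.

Lemma lim_S : S @ \oo --> pi.
Proof.
apply: (squeeze_cvgr _ lim_L lim_U).
near=> n; apply/andP; split; [apply: lower|apply: upper].
all: by near: n; exact: nbhs_infty_ge.
Unshelve. all: by end_near.
Qed.
End K.

Lemma term_eq (R : realType) n j : (j.+1 < n)%N ->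
  Num.sqrt ((n%:R - 2) / (j.+1%:R * (n - j.+1)%:R)) =
  Num.sqrt (n%:R - 2) * ff R n%:R j.+1%:R.
Proof.
move=> jn.
have n2 : (2 : R) <= n%:R by rewrite (ler_nat R 2); lia.
rewrite /ff natrB; last by lia.
rewrite sqrtrM; last by lra.
rewrite sqrtrV //; apply: mulr_ge0; first by rewrite ler0n.
by rewrite subr_ge0 ler_nat; lia.
Qed.

Lemma helper_div (R : realType) (a b c : R) : a != 0 -> c != 0 -> a * b / (c * a) = b / c.
Proof. by move=> a0 c0; field; rewrite a0 c0. Qed.

Theorem corollary4 (R : realType) :
  (fun n : nat => GG R (@path_rel n) / (pi * Num.sqrt (n%:R - 2)))
    @ \oo --> (1 : R).
Proof.
have H := @cvgMr_tmp _ _ _ _ _ _ (pi^-1) (@lim_S R).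
rewrite mulfV in H; last by rewrite gt_eqF // pi_gt0.
apply: cvg_trans (H _); apply: near_eq_cvg; near=> n.
have n3 : (3 <= n)%N by near: n; exact: nbhs_infty_ge.
rewrite /= GG_path; last by lia.
rewrite (eq_big_nat _ _ (F2 := fun j => Num.sqrt (n%:R - 2) * ff R n%:R j.+1%:R));
  last by move=> j /andP[_ hj]; apply: term_eq; lia.
rewrite -mulr_sumr -/(S R n).
have n2 : (2 : R) < n%:R by rewrite (ltr_nat R 2).
have s0 : Num.sqrt (n%:R - 2 : R) != 0 by rewrite gt_eqF // sqrtr_gt0; lra.
have p0 : (pi : R) != 0 by rewrite gt_eqF // pi_gt0.
by rewrite helper_div.
Unshelve. all: by end_near.
Qed.
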